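(* Let $X\in\mathbb{R}^{m\times n}$ have nonnegative entries and let $A_1,\ldots,A_m,B_1,\ldots,B_n$ be $r\times r$ real symmetric positive definite matrices. Define the linear maps $\mathcal{A}:\mathbb{S}^r\to\mathbb{R}^m$, $Z\mapsto(\operatorname{tr}(A_1Z),\ldots,\operatorname{tr}(A_mZ))$ and $\mathcal{B}:\mathbb{S}^r\to\mathbb{R}^n$, $Z\mapsto(\operatorname{tr}(B_1Z),\ldots,\operatorname{tr}(B_nZ))$. Suppose these matrices are fixed points of the Matrix Multiplicative Update rule, i.e. $$A_i=V_i\,\mathcal{B}^\top(X_{i:})\,V_i,\quad V_i=([\mathcal{B}^\top\mathcal{B}](A_i))^{-1}\#A_i\qquad (i\in[m]),$$ $$B_j=W_j\,\mathcal{A}^\top(X_{:j})\,W_j,\quad W_j=([\mathcal{A}^\top\mathcal{A}](B_j))^{-1}\#B_j\qquad (j\in[n]).$$ Then they satisfy the (reduced) KKT conditions of the problem $\inf\sum_{i,j}(X_{ij}-\operatorname{tr}(A_iB_j))^2$ over $A_i,B_j\in\mathbb{S}^r_+$, namely $$\mathcal{B}^\top(X_{i:})=[\mathcal{B}^\top\mathcal{B}](A_i)\ \ (i\in[m]),\qquad \mathcal{A}^\top(X_{:j})=[\mathcal{A}^\top\mathcal{A}](B_j)\ \ (j\in[n]).$$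
   Context: $\mathbb{S}^r$ denotes the space of $r\times r$ real symmetric matrices and $\mathbb{S}^r_+$ the cone of positive semidefinite ones. $X_{i:}\in\mathbb{R}^n$ is the $i$-th row and $X_{:j}\in\mathbb{R}^m$ the $j$-th column of $X$. Adjoints: $\mathcal{A}^\top(y)=\sum_i y_iA_i$, $\mathcal{B}^\top(z)=\sum_j z_jB_j$; thus $[\mathcal{A}^\top\mathcal{A}](Z)=\sum_i\operatorname{tr}(A_iZ)A_i$ and $[\mathcal{B}^\top\mathcal{B}](Z)=\sum_j\operatorname{tr}(B_jZ)B_j$. For positive definite $C,D$, $C\# D=C^{1/2}(C^{-1/2}DC^{-1/2})^{1/2}C^{1/2}$ is the matrix geometric mean. *)

(* Defs.v *)
From HB Require Import structures.
From mathcomp Require Import all_boot all_order all_algebra.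
From mathcomp Require Import boolp classical_sets reals.
Set Implicit Arguments. Unset Strict Implicit. Unset Printing Implicit Defensive.
Import Order.TTheory GRing.Theory Num.Theory.
Local Open Scope ring_scope.

Section Defs.
Variable R : realType.

Definition symmx {r} (A : 'M[R]_r) : Prop := A^T = A.

Definition psdmx {r} (A : 'M[R]_r) : Prop :=
  symmx A /\ forall v : 'rV[R]_r, 0 <= (v *m A *m v^T) 0 0.
Definition pdmx {r} (A : 'M[R]_r) : Prop :=
  symmx A /\ forall v : 'rV[R]_r, v != 0 -> 0 < (v *m A *m v^T) 0 0.

(* principal square root: the (unique) PSD matrix S with S S = A
   (chosen classically; defaults to 0 if none exists). *)
Definition msqrt {r} (A : 'M[R]_r) : 'M[R]_r :=
  xget 0 [set S : 'M[R]_r | psdmx S /\ S *m S = A].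

Definition gmean {r} (C D : 'M[R]_r) : 'M[R]_r :=
  let Ch := msqrt C in let Cih := invmx Ch in
  Ch *m msqrt (Cih *m D *m Cih) *m Ch.

(* adjoint B^T(z) = sum_j z_j B_j  of  Z |-> (tr(B_j Z))_j *)
Definition adjop {n r} (B : 'I_n -> 'M[R]_r) (z : 'I_n -> R) : 'M[R]_r :=
  \sum_(j < n) z j *: B j.

Definition gramop {n r} (B : 'I_n -> 'M[R]_r) (Z : 'M[R]_r) : 'M[R]_r :=
  \sum_(j < n) \tr (B j *m Z) *: B j.

End Defs.

(* Main.v *)
Require Import Defs.
From HB Require Import structures.
From mathcomp Require Import all_boot all_order all_algebra.
From mathcomp Require Import boolp classical_sets reals.
Import Order.TTheory GRing.Theory Num.Theory.
Local Open Scope ring_scope.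

Lemma msqrt_cases (R : realType) r (A : 'M[R]_r) :
  msqrt A *m msqrt A = A \/ msqrt A = 0.
Proof. by rewrite /msqrt; case: xgetP => [x _ [_ ->]|_]; [left|right]. Qed.

Lemma pd_unit (R : realType) r (A : 'M[R]_r) : pdmx A -> A \in unitmx.
Proof.
move=> [_ hA]; rewrite unitmxE unitfE; apply/negP => /det0P [v vn0 vA].
by move: (hA v vn0); rewrite vA mul0mx mxE ltxx.
Qed.

Lemma key (R : realType) r (C Q D : 'M[R]_r) :
  Q \in unitmx ->
  Q = gmean (invmx C) Q *m D *m gmean (invmx C) Q -> D = C.
Proof.
case: r C Q D => [|k] C Q D; first by move=> *; rewrite [D]flatmx0 [C]flatmx0.
move=> Qu EQ.
set G := gmean (invmx C) Q.
have Gu : G \in unitmx.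
  by move: Qu; rewrite {1}EQ !unitmx_mul => /andP[/andP[]].
set Ch := msqrt (invmx C).
set M := msqrt (invmx Ch *m Q *m invmx Ch).
have GE : G = Ch *m M *m Ch by [].
have [ChMu Chu] : (Ch *m M \in unitmx) /\ Ch \in unitmx.
  by move: Gu; rewrite GE unitmx_mul => /andP[].
have Mu : M \in unitmx by move: ChMu; rewrite unitmx_mul => /andP[].
have nz : forall X : 'M[R]_k.+1, X \in unitmx -> X <> 0.
  by move=> X Xu X0; move: Xu; rewrite X0 unitmxE det0 unitr0.
have hCh : Ch *m Ch = invmx C.
  by case: (@msqrt_cases _ _ (invmx C)) => // /(nz _ Chu).
have hM : M *m M = invmx Ch *m Q *m invmx Ch.
  by case: (@msqrt_cases _ _ (invmx Ch *m Q *m invmx Ch)) => // /(nz _ Mu).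
have EC : C = invmx (Ch *m Ch) by rewrite hCh invmxK.
have Pu : Ch *m Ch \in unitmx by rewrite unitmx_mul Chu.
have mid : Ch *m C *m Ch = 1%:M.
  have h1 : Ch *m (Ch *m C *m Ch) = Ch.
    by rewrite EC !mulmxA mulmxV // mul1mx.
  by rewrite -(mulKmx Chu (Ch *m C *m Ch)) h1 mulVmx.
have GCG : G *m C *m G = Q.
  rewrite GE.
  have -> : Ch *m M *m Ch *m C *m (Ch *m M *m Ch)
          = Ch *m M *m (Ch *m C *m Ch) *m M *m Ch by rewrite !mulmxA.
  rewrite mid mulmx1 -(mulmxA Ch M M) hM !mulmxA mulmxV // mul1mx.
  by rewrite mulmxKV.
have : G *m D *m G = G *m C *m G by rewrite GCG.
move=> /(congr1 (fun X => invmx G *m (X *m invmx G))).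
by rewrite !mulmxK // !mulKmx.
Qed.

Theorem theorem2 (R : realType) (m n r : nat) (X : 'M[R]_(m, n))
  (A : 'I_m -> 'M[R]_r) (B : 'I_n -> 'M[R]_r) :
  (forall i j, 0 <= X i j) ->
  (forall i, pdmx (A i)) ->
  (forall j, pdmx (B j)) ->
  (forall i, A i =
     gmean (invmx (gramop B (A i))) (A i)
       *m adjop B (fun j => X i j)
       *m gmean (invmx (gramop B (A i))) (A i)) ->
  (forall j, B j =
     gmean (invmx (gramop A (B j))) (B j)
       *m adjop A (fun i => X i j)
       *m gmean (invmx (gramop A (B j))) (B j)) ->
  (forall i, adjop B (fun j => X i j) = gramop B (A i)) /\
  (forall j, adjop A (fun i => X i j) = gramop A (B j)).
Proof.
move=> _ hA hB fA fB; split.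
- by move=> i; apply: (@key R r (gramop B (A i)) (A i) _ (@pd_unit R r _ (hA i)) (fA i)).
- by move=> j; apply: (@key R r (gramop A (B j)) (B j) _ (@pd_unit R r _ (hB j)) (fB j)).
Qed.
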